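(* Let $\bm{\sigma}=[\mathcal{T}_0,\dots,\mathcal{T}_N]$ be a finite trajectory, $\varphi_1,\varphi_2$ MTL formulas, and suppose binary variables $\xi^b_{\varphi_i,j}\in\{0,1\}$ satisfy $\xi^b_{\varphi_i,j}=1\Leftrightarrow\bm{\sigma}\models_j\varphi_i$ for $i=1,2$ and all relevant $j$. Let $k$ be a time index and $t_1\le t_2$ nonnegative integers with $k+t_2\le N$, and let $\tau=t_2-t_1+1$. Then $\bm{\sigma}\models_k \varphi_1\,\mathcal{U}_{[\![t_1,t_2]\!]}\,\varphi_2$ if and only if the following $\tau$ linear inequalities hold: $$\sum_{j=k+t_1}^{k+t_2}\xi^b_{\varphi_2,j}\ge1,$$ $$\xi^b_{\varphi_2,t}\le\sum_{j=k+t_1}^{t-1}\left(\frac{\xi^b_{\varphi_1,j}}{t-t_1-k}+\xi^b_{\varphi_2,j}\right)\quad\text{for all integers } t \text{ with } k+t_1<t\le k+t_2.$$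
   Context: MTL semantics on a finite trajectory $\bm{\sigma}=[\mathcal{T}_0,\dots,\mathcal{T}_N]$, $\mathcal{T}_k\subseteq\mathcal{P}$. The (nonstandard) until operator is defined by: $\bm{\sigma}\models_k\varphi_1\,\mathcal{U}_{[\![t_1,t_2]\!]}\,\varphi_2$ iff there exists an integer $t\in[k+t_1,k+t_2]$ with $\bm{\sigma}\models_t\varphi_2$ and $\bm{\sigma}\models_{t'}\varphi_1$ for all integers $t'$ with $k+t_1\le t'<t$. Here $[\![a,b]\!]$ denotes the integers in $[a,b]$. *)

(* Defs.v *)
From mathcomp Require Import all_boot all_order all_algebra.
Set Implicit Arguments. Unset Strict Implicit. Unset Printing Implicit Defensive.

Inductive mtl (P : Type) : Type :=
  | MTrue
  | MAtom of P
  | MNot of mtl P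
  | MAnd of mtl P & mtl P
  | MUntil of nat & nat & mtl P & mtl P.   (* MUntil t1 t2 f g = f U_[[t1,t2]] g *)

(* A finite trajectory [T_0; ...; T_N] : each T_k is a subset of P, given by
   its membership predicate. Atoms are false outside the trajectory. *)
Definition trajectory (P : Type) := seq (P -> bool).

(* sat sigma k f  <->  sigma |=_k f  (with the paper's nonstandard until). *)
Fixpoint sat (P : Type) (sigma : trajectory P) (k : nat) (f : mtl P) : Prop :=
  match f with
  | MTrue => True
  | MAtom p => nth (fun _ => false) sigma k p
  | MNot g => ~ sat sigma k g
  | MAnd g h => sat sigma k g /\ sat sigma k h
  | MUntil t1 t2 g h =>
      exists t : nat, [/\ k + t1 <= t, t <= k + t2, sat sigma t h &
        forall t' : nat, k + t1 <= t' -> t' < t -> sat sigma t' g]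
  end.

(* Main.v *)
Require Import Defs.
From mathcomp Require Import all_boot all_order all_algebra.
From mathcomp Require Import zify.
Import Order.TTheory GRing.Theory Num.Theory.
Local Open Scope ring_scope.

Lemma sum_ge0_nat (R : realFieldType) (F : nat -> R) a c :
  (forall i, (a <= i < c)%N -> 0 <= F i) -> 0 <= \sum_(a <= i < c) F i.
Proof.
move=> H; apply: le_trans (_ : \sum_(a <= i < c) (0:R) <= _).
  by rewrite big1.
exact: ler_sum_nat.
Qed.

Lemma term_le_sum (R : realFieldType) (F : nat -> R) a c j :
  (a <= j < c)%N -> (forall i, (a <= i < c)%N -> 0 <= F i) ->
  F j <= \sum_(a <= i < c) F i.
Proof.
move=> /andP[h1 h2] H.
rewrite (big_cat_nat _ (n:=j)) //=; last exact: ltnW.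
rewrite [\sum_(j <= i < c) _]big_ltn //.
rewrite addrCA lerDl addr_ge0 //.
  apply: sum_ge0_nat => i /andP[i1 i2]; apply: H; lia.
apply: sum_ge0_nat => i /andP[i1 i2]; apply: H; lia.
Qed.

Lemma sum_le_nat (R : realFieldType) (F : nat -> R) a c :
  (forall i, (a <= i < c)%N -> F i <= 1) -> \sum_(a <= i < c) F i <= (c - a)%:R.
Proof.
move=> H; apply: le_trans (_ : \sum_(a <= i < c) (1:R) <= _).
  exact: ler_sum_nat.
by rewrite sumr_const_nat.
Qed.

Theorem proposition4 (R : realFieldType) (P : Type) (sigma : trajectory P)
  (phi1 phi2 : mtl P) (xi1 xi2 : nat -> R) (k t1 t2 : nat) :
  (t1 <= t2)%N ->
  (k + t2 < size sigma)%N ->   (* k + t2 <= N where sigma = [T_0; ...; T_N] *)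
  (forall j : nat, (k + t1 <= j <= k + t2)%N ->
     (xi1 j = 0 \/ xi1 j = 1) /\ (xi2 j = 0 \/ xi2 j = 1)) ->
  (forall j : nat, (k + t1 <= j <= k + t2)%N ->
     (xi1 j = 1 <-> sat sigma j phi1) /\ (xi2 j = 1 <-> sat sigma j phi2)) ->
  (sat sigma k (MUntil t1 t2 phi1 phi2) <->
   (1 <= \sum_(k + t1 <= j < (k + t2).+1) xi2 j /\
    forall t : nat, (k + t1 < t <= k + t2)%N ->
      xi2 t <= \sum_(k + t1 <= j < t) (xi1 j / (t - t1 - k)%:R + xi2 j))).
Proof.
move=> ht _ H01 Hsat.
have ge1 : forall j, (k + t1 <= j <= k + t2)%N -> 0 <= xi1 j /\ 0 <= xi2 j.
  move=> j /H01 [[->|->] [->|->]]; by rewrite ?ler01 ?lexx.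
have le1 : forall j, (k + t1 <= j <= k + t2)%N -> xi1 j <= 1 /\ xi2 j <= 1.
  move=> j /H01 [[->|->] [->|->]]; by rewrite ?ler01 ?lexx.
split.
- move=> [s [hs1 hs2 hs hs']].
  have xs : xi2 s = 1 by apply/(proj2 (Hsat s _)) => //; apply/andP.
  split.
    rewrite -xs; apply: term_le_sum; first lia.
    move=> i hi; apply: (proj2 (ge1 i _)); lia.
  move=> t /andP[ta tb].
  have npos : (0 : R) < (t - t1 - k)%:R by rewrite ltr0n; lia.
  have [hts|hts] := leqP t s.
  + apply: le_trans (proj2 (le1 t _)) _; first lia.
    apply: le_trans (_ : \sum_(k + t1 <= j < t) (1 / (t - t1 - k)%:R) <= _).
      rewrite sumr_const_nat.
      have -> : (t - (k + t1) = t - t1 - k)%N by lia.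
      by rewrite mul1r -[(_^-1) *+ _]mulr_natr mulVf // gt_eqF.
    apply: ler_sum_nat => i hi.
    have -> : xi1 i = 1 by apply/(proj1 (Hsat i _)); [lia | apply: hs'; lia].
    rewrite lerDl; apply: (proj2 (ge1 i _)); lia.
  + apply: le_trans (proj2 (le1 t _)) _; first lia.
    apply: le_trans (_ : xi1 s / (t - t1 - k)%:R + xi2 s <= _).
      rewrite xs lerDr divr_ge0 //.
      apply: (proj1 (ge1 s _)); lia.
    apply: term_le_sum; first lia.
    move=> i hi; have [g1 g2] := ge1 i ltac:(lia).
    by rewrite addr_ge0 // divr_ge0 // ltW.
- move=> [hsum hcon].
  pose Q := fun j => (k + t1 <= j <= k + t2)%N && (xi2 j == 1).
  have exQ : exists j, Q j.
    case: (boolP (has Q (index_iota (k + t1) (k + t2).+1))).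
      by move=> /hasP [j _ qj]; exists j.
    move=> /hasPn hn; exfalso.
    have : \sum_(k + t1 <= j < (k + t2).+1) xi2 j <= 0.
      apply: le_trans (_ : \sum_(k + t1 <= j < (k + t2).+1) (0:R) <= _); last by rewrite big1.
      apply: ler_sum_nat => i hi.
      have := hn i; rewrite mem_index_iota hi /Q => /(_ isT).
      have hi' : (k + t1 <= i <= k + t2)%N by lia.
      rewrite hi' /= => /eqP h.
      by case: (proj2 (H01 i hi')) => // ->.
    by move=> h; have := le_trans hsum h; rewrite ler10.
  case: (ex_minnP exQ) => m /andP[hm /eqP xm] minm.
  exists m; split; [lia | lia | by apply/(proj2 (Hsat m hm)) |].
  move=> t' ht1 ht2.
  have hb : (k + t1 <= t' <= k + t2)%N by lia.
  case: (proj1 (H01 t' hb)) => hx; last by apply/(proj1 (Hsat t' hb)).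
  exfalso.
  have hmt : (k + t1 < m <= k + t2)%N by lia.
  have := hcon m hmt; rewrite xm.
  set x := (1 / (m - t1 - k)%:R : R).
  have npos : (0 : R) < (m - t1 - k)%:R by rewrite ltr0n; lia.
  have hF : forall j, (k + t1 <= j < m)%N -> xi1 j / (m - t1 - k)%:R + xi2 j <= x.
    move=> j hj.
    have hj' : (k + t1 <= j <= k + t2)%N by lia.
    have -> : xi2 j = 0.
      case: (proj2 (H01 j hj')) => // h2.
      have : (m <= j)%N by apply: minm; rewrite /Q hj' h2 eqxx.
      lia.
    rewrite addr0 /x ler_pM2r ?invr_gt0 //.
    exact: (proj1 (le1 j hj')).
  have hS : forall a c, (k + t1 <= a)%N -> (c <= m)%N ->
      \sum_(a <= j < c) (xi1 j / (m - t1 - k)%:R + xi2 j) <= x *+ (c - a).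
    move=> a c ha hc.
    apply: le_trans (_ : \sum_(a <= j < c) x <= _); last by rewrite sumr_const_nat.
    apply: ler_sum_nat => j hj; apply: hF; lia.
  rewrite (big_cat_nat _ (n:=t')) //=; last exact: ltnW.
  rewrite [\sum_(t' <= i < m) _]big_ltn // hx mul0r add0r.
  have xt' : xi2 t' = 0.
    case: (proj2 (H01 t' hb)) => // h2.
    have : (m <= t')%N by apply: minm; rewrite /Q hb h2 eqxx.
    lia.
  rewrite xt' add0r => h.
  have := le_trans h (lerD (hS _ _ (leqnn _) (ltnW ht2)) (hS _ _ (leqW ht1) (leqnn _))).
  rewrite -mulrnDr /x.
  have -> : (t' - (k + t1) + (m - t'.+1) = (m - t1 - k) - 1)%N by lia.
  rewrite mul1r -[(_^-1) *+ _]mulr_natr mulrC ler_pdivlMr // mul1r ler_nat.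
  lia.
Qed.
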